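(* Let $q$ be a complex number with $|q|<1$. Then \[ \sum_{n\geq 0} q^{4n+1} (q^{4n+4};q^4)_\infty (q;q)_{2n} =\frac{2q^2(q^4;q^4)_\infty}{1+q^3}+ \frac{q(1-q) (q;q)_\infty}{1+q^3}, \] and \[ (1+q^3) \sum_{n\geq 0} \frac{(-q^2;q^2)_n\, q^{2n+1}}{(q;q^2)_{n}} = \frac{q^2(q^4;q^4)_\infty}{(q;q)_\infty}-q^2+q . \]
   Context: For a complex number $a$ and $|q|<1$: $(a;q)_0=1$, $(a;q)_n=\prod_{j=0}^{n-1}(1-aq^j)$ for integers $n\ge 1$, and $(a;q)_\infty=\prod_{j=0}^{\infty}(1-aq^j)$. *)

(* Defs.v *)
From Stdlib Require Import Reals.
From Coquelicot Require Import Coquelicot.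
Open Scope C_scope.

Fixpoint qpoch (a q : C) (n : nat) : C :=
  match n with
  | O => 1
  | S m => qpoch a q m * (1 - a * q ^ m)
  end.

(* infinite q-Pochhammer symbol (a;q)_oo: the limit of the partial products
   (Coquelicot's [lim] on the complete space C; it is the genuine limit
   whenever the partial products converge, which they do for |q| < 1). *)
Definition qpoch_inf (a q : C) : C :=
  @lim (CompleteNormedModule.CompleteSpace _ C_CompleteNormedModule) (filtermap (fun n => qpoch a q n) eventually).

(* Main.v *)
From Stdlib Require Import Reals Lra Lia.
Require Import Defs.
From Coquelicot Require Import Coquelicot.
Open Scope C_scope.

Definition CV (u : nat -> C) (l : C) := filterlim u eventually (locally l).

Lemma CV_eps u l : CV u l <-> forall eps : R, (0 < eps)%R -> exists N, forall n, (N <= n)%nat -> (Cmod (u n - l) < eps)%R.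
Proof.
  unfold CV. rewrite filterlim_locally_ball_norm. split.
  - intros H eps He. destruct (H (mkposreal eps He)) as [N HN]. exists N. intros n Hn.
    specialize (HN n Hn). unfold ball_norm in HN. exact HN.
  - intros H eps. destruct (H eps (cond_pos eps)) as [N HN]. exists N. intros n Hn.
    unfold ball_norm. apply (HN n Hn).
Qed.

Lemma CV_plus u v l m : CV u l -> CV v m -> CV (fun n => u n + v n) (l + m).
Proof.
  intros Hu Hv. unfold CV.
  apply (filterlim_comp_2 (G:=locally l) (H:=locally m) u v (fun x y => x + y) Hu Hv).
  apply (@filterlim_plus C_AbsRing C_NormedModule l m).
Qed.

Lemma CV_mult u v l m : CV u l -> CV v m -> CV (fun n => u n * v n) (l * m).
Proof.
  rewrite !CV_eps. intros Hu Hv eps He.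
  assert (Hl := Cmod_ge_0 l). assert (Hm := Cmod_ge_0 m).
  destruct (Hv 1%R Rlt_0_1) as [N0 H0].
  destruct (Hu (eps / (2 * (Cmod m + 1)))%R) as [N1 H1].
  { apply Rdiv_lt_0_compat; lra. }
  destruct (Hv (eps / (2 * (Cmod l + 1)))%R) as [N2 H2].
  { apply Rdiv_lt_0_compat; lra. }
  exists (N0 + N1 + N2)%nat. intros n Hn.
  specialize (H0 n ltac:(lia)). specialize (H1 n ltac:(lia)). specialize (H2 n ltac:(lia)).
  replace (u n * v n - l * m) with ((u n - l) * v n + l * (v n - m)) by ring.
  eapply Rle_lt_trans. apply Cmod_triangle. rewrite !Cmod_mult.
  assert (Hv1 : (Cmod (v n) <= Cmod m + 1)%R).
  { replace (v n) with ((v n - m) + m) by ring. eapply Rle_trans. apply Cmod_triangle. lra. }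
  assert (A : (Cmod (u n - l) * Cmod (v n) <= eps / 2)%R).
  { apply Rle_trans with (eps / (2 * (Cmod m + 1)) * (Cmod m + 1))%R.
    apply Rmult_le_compat; try apply Cmod_ge_0; lra.
    right. field. lra. }
  assert (B : (Cmod l * Cmod (v n - m) < eps / 2)%R).
  { apply Rle_lt_trans with (Cmod l * (eps / (2 * (Cmod l + 1))))%R.
    apply Rmult_le_compat_l; lra.
    apply Rlt_le_trans with ((Cmod l + 1) * (eps / (2 * (Cmod l + 1))))%R.
    apply Rmult_lt_compat_r. apply Rdiv_lt_0_compat; lra. lra.
    right. field. lra. }
  lra.
Qed.

Lemma CV_opp u l : CV u l -> CV (fun n => - u n) (- l).
Proof.
  intros Hu. unfold CV.
  apply (filterlim_comp _ _ _ u (fun x => - x) _ (locally l) _ Hu).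
  apply (@filterlim_opp C_AbsRing C_NormedModule l).
Qed.

Lemma CV_const c : CV (fun _ => c) c.
Proof. apply CV_eps. intros eps He. exists O. intros n _.
  replace (c - c) with (RtoC 0) by ring. rewrite Cmod_0. exact He. Qed.

Lemma CV_ext u v l : (forall n, u n = v n) -> CV u l -> CV v l.
Proof. intros E. rewrite !CV_eps. intros H eps He. destruct (H eps He) as [N HN].
  exists N. intros n Hn. rewrite <- E. auto. Qed.

Lemma CV_unique u l m : CV u l -> CV u m -> l = m.
Proof. intros H1 H2. exact (filterlim_locally_unique (F:=eventually) u l m H1 H2). Qed.

Lemma CV_shift u l k : CV u l -> CV (fun n => u (n + k)%nat) l.
Proof. rewrite !CV_eps. intros H eps He. destruct (H eps He) as [N HN].
  exists N. intros n Hn. apply HN. lia. Qed.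

Lemma CV_shift_inv u l k : CV (fun n => u (n + k)%nat) l -> CV u l.
Proof. rewrite !CV_eps. intros H eps He. destruct (H eps He) as [N HN].
  exists (N + k)%nat. intros n Hn. replace n with ((n - k) + k)%nat by lia. apply HN. lia. Qed.

Lemma CV_double u l : CV u l -> CV (fun n => u (2 * n)%nat) l.
Proof. rewrite !CV_eps. intros H eps He. destruct (H eps He) as [N HN].
  exists N. intros n Hn. apply HN. lia. Qed.

Lemma CV_pow0 q : (Cmod q < 1)%R -> CV (fun n => q ^ n) 0.
Proof. intros Hq. apply CV_eps. intros eps He.
  assert (Hr : (Rabs (Cmod q) < 1)%R) by (rewrite Rabs_pos_eq; auto; apply Cmod_ge_0).
  destruct (pow_lt_1_zero _ Hr eps He) as [N HN]. exists N. intros n Hn.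
  replace (q ^ n - 0) with (q ^ n) by ring. rewrite Cmod_pow.
  specialize (HN n ltac:(lia)). rewrite Rabs_pos_eq in HN; auto.
  apply pow_le, Cmod_ge_0. Qed.

Lemma CV_inv (u : nat -> C) (l : C) : l <> 0 -> CV u l -> CV (fun n => / u n) (/ l).
Proof. intros Hl. rewrite !CV_eps. intros H eps He.
  assert (Hl0 : (0 < Cmod l)%R) by (apply (proj1 (Cmod_gt_0 l)); auto).
  destruct (H (Cmod l / 2)%R ltac:(lra)) as [N1 H1].
  destruct (H (eps * (Cmod l * Cmod l) / 2)%R) as [N2 H2].
  { apply Rmult_lt_0_compat; [apply Rmult_lt_0_compat|]; nra. }
  exists (N1 + N2)%nat. intros n Hn.
  specialize (H1 n ltac:(lia)). specialize (H2 n ltac:(lia)).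
  assert (Hun : (Cmod l / 2 <= Cmod (u n))%R).
  { assert (Ht : (Cmod l <= Cmod (u n) + Cmod (l - u n))%R).
    { replace l with (u n + (l - u n)) at 1 by ring. apply Cmod_triangle. }
    replace (l - u n) with (- (u n - l)) in Ht by ring. rewrite Cmod_opp in Ht. lra. }
  assert (Hu0 : u n <> 0).
  { intros E. rewrite E, Cmod_0 in Hun. lra. }
  replace (/ u n - / l) with ((- (u n - l)) * / (u n * l)) by (field; auto).
  rewrite Cmod_mult, Cmod_opp, Cmod_inv, Cmod_mult.
  2: { apply Cmult_neq_0; auto. }
  apply Rle_lt_trans with ((Cmod (u n - l)) * / (Cmod l / 2 * Cmod l))%R.
  { apply Rmult_le_compat_l. apply Cmod_ge_0. apply Rinv_le_contravar. nra.
    apply Rmult_le_compat_r; lra. }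
  apply Rlt_le_trans with ((eps * (Cmod l * Cmod l) / 2) * / (Cmod l / 2 * Cmod l))%R.
  { apply Rmult_lt_compat_r. apply Rinv_0_lt_compat. nra. auto. }
  right. field. lra.
Qed.

Lemma CV_lower (u : nat -> C) (l : C) (c : R) : (exists N, forall n, (N <= n)%nat -> (c <= Cmod (u n))%R) -> CV u l -> (c <= Cmod l)%R.
Proof. intros [N HN] H. rewrite CV_eps in H.
  destruct (Rle_or_lt c (Cmod l)) as [h|h]; auto.
  destruct (H (c - Cmod l)%R ltac:(lra)) as [N2 H2].
  specialize (HN (N + N2)%nat ltac:(lia)). specialize (H2 (N + N2)%nat ltac:(lia)).
  assert (Cmod (u (N + N2)%nat) <= Cmod l + Cmod (u (N+N2)%nat - l))%R.
  { replace (u (N+N2)%nat) with (l + (u (N+N2)%nat - l)) at 1 by ring. apply Cmod_triangle. }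
  lra.
Qed.

Lemma qpoch_inf_eq a q l : CV (qpoch a q) l -> qpoch_inf a q = l.
Proof.
  intros H. unfold qpoch_inf.
  set (T := CompleteNormedModule.CompleteSpace _ C_CompleteNormedModule).
  set (F := filtermap (qpoch a q) eventually).
  assert (PF : ProperFilter F) by (apply filtermap_proper_filter; apply eventually_filter).
  assert (HC : @cauchy T F).
  { intros eps. exists l. apply H. apply (locally_ball l eps). }
  assert (HB := @complete_cauchy T F PF HC).
  assert (H2 : CV (qpoch a q) (@lim T F)).
  { intros P [eps HP]. specialize (HB eps). unfold F, filtermap in HB.
    unfold filtermap. eapply filter_imp; [|exact HB]. intros n Hn. apply HP. exact Hn. }
  exact (CV_unique _ _ _ H2 H).
Qed.

Lemma qpoch_S a q n : qpoch a q (S n) = qpoch a q n * (1 - a * q ^ n).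
Proof. reflexivity. Qed.

Lemma qpoch_split a q n m : qpoch a q (n + m) = qpoch a q n * qpoch (a * q ^ n) q m.
Proof. induction m as [|m IH].
  - rewrite Nat.add_0_r. simpl. ring.
  - rewrite Nat.add_succ_r, !qpoch_S, IH, Cpow_add_r. ring.
Qed.

Lemma exp_le' x y : (x <= y)%R -> (exp x <= exp y)%R.
Proof. intros [h|h]. left; apply exp_increasing; auto. subst; lra. Qed.

Lemma Cmod_1_minus z : (Cmod (1 - z) <= 1 + Cmod z)%R.
Proof. eapply Rle_trans. apply Cmod_triangle. rewrite Cmod_opp, Cmod_1. lra. Qed.

Lemma Cmod_1_minus_ge z : (1 - Cmod z <= Cmod (1 - z))%R.
Proof. assert (H : (Cmod 1 <= Cmod (1 - z) + Cmod z)%R).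
  { replace (RtoC 1) with ((1 - z) + z) at 1 by ring. apply Cmod_triangle. }
  rewrite Cmod_1 in H. lra. Qed.

Lemma qpoch_upper a q n : (Cmod q < 1)%R ->
  (Cmod (qpoch a q n) <= exp (Cmod a * (1 - Cmod q ^ n) / (1 - Cmod q)))%R.
Proof. intros Hq. assert (Hr := Cmod_ge_0 q). assert (Ha := Cmod_ge_0 a).
  induction n as [|n IH].
  - simpl. rewrite Cmod_1. replace (Cmod a * (1 - 1) / (1 - Cmod q))%R with 0%R by (field; lra).
    rewrite exp_0. lra.
  - rewrite qpoch_S, Cmod_mult.
    replace (Cmod a * (1 - Cmod q ^ S n) / (1 - Cmod q))%R with
      (Cmod a * (1 - Cmod q ^ n) / (1 - Cmod q) + Cmod a * Cmod q ^ n)%R by (simpl; field; lra).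
    rewrite exp_plus. apply Rmult_le_compat; try apply Cmod_ge_0; auto.
    eapply Rle_trans. apply Cmod_1_minus. rewrite Cmod_mult, Cmod_pow.
    apply exp_ineq1_le.
Qed.

Lemma pow_le1 r n : (0 <= r)%R -> (r <= 1)%R -> (r ^ n <= 1)%R.
Proof. intros. induction n; simpl. lra. replace 1%R with (1 * 1)%R by lra. apply Rmult_le_compat; auto; try lra. apply pow_le; auto. Qed.

Lemma qpoch_bound a q : (Cmod q < 1)%R -> forall n,
  (Cmod (qpoch a q n) <= exp (Cmod a / (1 - Cmod q)))%R.
Proof. intros Hq n. eapply Rle_trans. apply qpoch_upper; auto.
  apply exp_le'. assert (Hr := Cmod_ge_0 q). assert (Ha := Cmod_ge_0 a).
  assert (0 <= Cmod q ^ n)%R by (apply pow_le; auto).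
  unfold Rdiv. apply Rmult_le_compat_r. left; apply Rinv_0_lt_compat; lra. nra.
Qed.

Lemma qpoch_lower a q n : (Cmod q < 1)%R -> (Cmod a <= 1)%R ->
  (1 - Cmod a * (1 - Cmod q ^ n) / (1 - Cmod q) <= Cmod (qpoch a q n))%R.
Proof. intros Hq Ha1. assert (Hr := Cmod_ge_0 q). assert (Ha := Cmod_ge_0 a).
  induction n as [|n IH].
  - simpl. rewrite Cmod_1. replace (Cmod a * (1 - 1) / (1 - Cmod q))%R with 0%R by (field; lra). lra.
  - rewrite qpoch_S, Cmod_mult.
    assert (Hp : (0 <= Cmod q ^ n)%R) by (apply pow_le; auto).
    assert (Hp1 : (Cmod q ^ n <= 1)%R) by (apply pow_le1; lra).
    assert (HA : (0 <= Cmod a * (1 - Cmod q ^ n) / (1 - Cmod q))%R).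
    { unfold Rdiv. apply Rmult_le_pos. nra. left; apply Rinv_0_lt_compat; lra. }
    assert (Hf : (1 - Cmod a * Cmod q ^ n <= Cmod (1 - a * q ^ n))%R).
    { eapply Rle_trans; [|apply Cmod_1_minus_ge]. rewrite Cmod_mult, Cmod_pow. lra. }
    assert (Hf0 : (0 <= 1 - Cmod a * Cmod q ^ n)%R) by nra.
    replace (1 - Cmod a * (1 - Cmod q ^ S n) / (1 - Cmod q))%R with
      (1 - Cmod a * (1 - Cmod q ^ n) / (1 - Cmod q) - Cmod a * Cmod q ^ n)%R by (simpl; field; lra).
    set (A := (Cmod a * (1 - Cmod q ^ n) / (1 - Cmod q))%R) in *.
    set (t := (Cmod a * Cmod q ^ n)%R) in *.
    assert (0 <= t)%R by (unfold t; apply Rmult_le_pos; auto). assert (0 <= A * t)%R by (apply Rmult_le_pos; auto).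
    apply Rle_trans with ((1 - A) * (1 - t))%R. nra.
    destruct (Rle_or_lt 0 (1 - A)) as [h|h].
    + apply Rmult_le_compat; auto.
    + apply Rle_trans with 0%R. nra. apply Rmult_le_pos; apply Cmod_ge_0.
Qed.

Lemma qpoch_cv a q : (Cmod q < 1)%R -> exists l, CV (qpoch a q) l.
Proof. intros Hq. assert (Hr := Cmod_ge_0 q).
  set (M := exp (Cmod a / (1 - Cmod q))).
  set (t := fun k => qpoch a q k * (a * q ^ k)).
  assert (Hex : @ex_series C_AbsRing C_CompleteNormedModule t).
  { apply (ex_series_le t (fun k => M * Cmod a * Cmod q ^ k)%R).
    - intros k. change (Cmod (t k) <= M * Cmod a * Cmod q ^ k)%R. unfold t. rewrite !Cmod_mult, Cmod_pow.
      rewrite Rmult_assoc. apply Rmult_le_compat_r.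
      apply Rmult_le_pos; [apply Cmod_ge_0| apply pow_le; auto].
      apply qpoch_bound; auto.
    - apply (@ex_series_scal R_AbsRing R_NormedModule (M * Cmod a)%R (fun k => Cmod q ^ k)%R).
      apply ex_series_geom. rewrite Rabs_pos_eq; auto. }
  destruct Hex as [s Hs].
  exists (1 - s).
  apply (CV_shift_inv _ _ 1).
  assert (E : forall n, qpoch a q (n + 1) = 1 - sum_n t n).
  { intros n. rewrite Nat.add_1_r. induction n as [|n IH].
    - rewrite sum_O. unfold t. simpl. ring.
    - rewrite sum_Sn. assert (E2 : sum_n t n = 1 - qpoch a q (S n)).
      { assert (F : forall x y : C, x = 1 - y -> y = 1 - x) by (intros x y ->; ring). apply F. exact IH. }
      rewrite E2. rewrite (qpoch_S a q (S n)). unfold t. match goal with |- context [plus ?x ?y] => change (plus x y) with (Cplus x y) end. simpl. ring. }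
  apply (CV_ext (fun n => 1 - sum_n t n)). intros n; rewrite E; auto.
  apply CV_plus. apply CV_const. apply CV_opp. exact Hs.
Qed.

Lemma qpoch_fin_nz a q n : (Cmod q < 1)%R -> (Cmod a < 1)%R -> qpoch a q n <> 0.
Proof. intros Hq Ha. induction n as [|n IH].
  - simpl. apply C1_nz.
  - rewrite qpoch_S. apply Cmult_neq_0; auto.
    intros E. assert (H := Cmod_1_minus_ge (a * q ^ n)). rewrite E, Cmod_0, Cmod_mult, Cmod_pow in H.
    assert (0 <= Cmod q ^ n <= 1)%R by (split; [apply pow_le, Cmod_ge_0| apply pow_le1; [apply Cmod_ge_0|lra]]).
    assert (0 <= Cmod a)%R by apply Cmod_ge_0. nra.
Qed.

Lemma qpoch_nz a q l : (Cmod q < 1)%R -> (Cmod a < 1)%R -> CV (qpoch a q) l -> l <> 0.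
Proof. intros Hq Ha H.
  assert (Hr := Cmod_ge_0 q). assert (Ha0 := Cmod_ge_0 a).
  assert (Hr' : (Rabs (Cmod q) < 1)%R) by (rewrite Rabs_pos_eq; auto).
  destruct (pow_lt_1_zero _ Hr' ((1 - Cmod q) / 2)%R ltac:(lra)) as [N HN].
  specialize (HN N (Nat.le_refl N)). rewrite Rabs_pos_eq in HN by (apply pow_le; auto).
  set (b := a * q ^ N).
  assert (Hb : (Cmod b <= Cmod q ^ N)%R).
  { unfold b. rewrite Cmod_mult, Cmod_pow. assert (0 <= Cmod q ^ N)%R by (apply pow_le; auto). nra. }
  assert (Hb1 : (Cmod b <= 1)%R).
  { assert (Cmod q ^ N <= 1)%R by (apply pow_le1; lra). lra. }
  assert (Hlow : forall m, (1/2 <= Cmod (qpoch b q m))%R).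
  { intros m. eapply Rle_trans; [|apply qpoch_lower; auto].
    assert (0 <= Cmod q ^ m <= 1)%R by (split; [apply pow_le; auto| apply pow_le1; lra]).
    assert (Cmod b * (1 - Cmod q ^ m) / (1 - Cmod q) <= Cmod b / (1 - Cmod q))%R.
    { unfold Rdiv. apply Rmult_le_compat_r. left; apply Rinv_0_lt_compat; lra.
      assert (0 <= Cmod b)%R by apply Cmod_ge_0. nra. }
    assert (Cmod b / (1 - Cmod q) <= 1/2)%R.
    { apply Rle_trans with ((1 - Cmod q) / 2 / (1 - Cmod q))%R.
      unfold Rdiv. apply Rmult_le_compat_r. left; apply Rinv_0_lt_compat; lra. lra.
      right. field. lra. }
    lra. }
  assert (HP := qpoch_fin_nz a q N Hq Ha).
  assert (HP0 : (0 < Cmod (qpoch a q N))%R) by (apply (proj1 (Cmod_gt_0 _)); auto).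
  assert (H2 : CV (fun m => qpoch a q N * qpoch b q m) l).
  { apply (CV_ext (fun m => qpoch a q (m + N))).
    intros m. rewrite Nat.add_comm, qpoch_split. reflexivity.
    apply CV_shift. exact H. }
  assert (HL : (Cmod (qpoch a q N) / 2 <= Cmod l)%R).
  { apply (CV_lower _ _ _ ) with (2 := H2). exists O. intros m _.
    rewrite Cmod_mult. specialize (Hlow m). nra. }
  intros E. rewrite E, Cmod_0 in HL. lra.
Qed.

Lemma telescope (t c : nat -> C) (l : C) :
  (forall n, t n = c n - c (S n)) -> CV c l -> is_series t (c O - l).
Proof. intros Ht Hc. unfold is_series.
  assert (E : forall n, sum_n t n = c O - c (S n)).
  { induction n as [|n IH].
    - rewrite sum_O. apply Ht.
    - rewrite sum_Sn, IH, Ht. match goal with |- context [plus ?x ?y] => change (plus x y) with (Cplus x y) end. assert (F : forall a b d : C, a - b + (b - d) = a - d) by (intros; ring). apply F. }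
  apply (CV_ext (fun n => c O - c (n + 1)%nat)).
  { intros n. rewrite E. f_equal. f_equal. lia. }
  apply CV_plus. apply CV_const. apply CV_opp. apply CV_shift. exact Hc.
Qed.

Lemma CV_eq u l m : CV u l -> l = m -> CV u m.
Proof. intros H ->; exact H. Qed.

Lemma pow_facts (q : C) (n : nat) :
  (q ^ 2) ^ n = q ^ (2 * n) /\ (q ^ 4) ^ n = q ^ (2 * n) * q ^ (2 * n) /\
  q ^ (4 * n + 1) = q * (q ^ (2 * n) * q ^ (2 * n)) /\ q ^ (2 * n + 1) = q * q ^ (2 * n) /\
  q ^ (S (2 * n)) = q * q ^ (2 * n) /\ q ^ (2 * S n) = q ^ 2 * q ^ (2 * n) /\
  q ^ (4 * n + 4) = q ^ 4 * (q ^ 4) ^ n.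
Proof.
  assert (A : (q ^ 4) ^ n = q ^ (2 * n) * q ^ (2 * n)).
  { rewrite <- Cpow_mult_r, <- Cpow_add_r. f_equal. lia. }
  repeat split.
  - rewrite <- Cpow_mult_r. reflexivity.
  - exact A.
  - rewrite <- A, <- Cpow_mult_r, Cpow_add_r. simpl. ring.
  - rewrite Cpow_add_r. simpl. ring.
  - replace (2 * S n)%nat with (2 + 2 * n)%nat by lia. rewrite Cpow_add_r. reflexivity.
  - rewrite <- Cpow_mult_r, <- Cpow_add_r. f_equal. lia.
Qed.

Theorem theorem3 (q : C) (hq : (Cmod q < 1)%R) :
  is_series
    (fun n : nat => q ^ (4 * n + 1) * qpoch_inf (q ^ (4 * n + 4)) (q ^ 4)
                    * qpoch q q (2 * n))
    (2 * q ^ 2 * qpoch_inf (q ^ 4) (q ^ 4) / (1 + q ^ 3)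
     + q * (1 - q) * qpoch_inf q q / (1 + q ^ 3))
  /\
  exists S : C,
    is_series
      (fun n : nat => qpoch (- q ^ 2) (q ^ 2) n * q ^ (2 * n + 1)
                      / qpoch q (q ^ 2) n) S
    /\ (1 + q ^ 3) * S
       = q ^ 2 * qpoch_inf (q ^ 4) (q ^ 4) / qpoch_inf q q - q ^ 2 + q.
Proof.
  assert (Hr := Cmod_ge_0 q).
  assert (Hp : forall k, (0 < k)%nat -> (Cmod (q ^ k) < 1)%R).
  { intros k Hk. rewrite Cmod_pow. destruct k as [|k]; [lia|]. simpl.
    assert (Cmod q ^ k <= 1)%R by (apply pow_le1; lra).
    assert (0 <= Cmod q ^ k)%R by (apply pow_le; auto). nra. }
  assert (H4 := Hp 4%nat ltac:(lia)). assert (H2 := Hp 2%nat ltac:(lia)).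
  assert (H3 := Hp 3%nat ltac:(lia)).
  assert (Hq3 : 1 + q ^ 3 <> 0).
  { intros E. assert (H : q ^ 3 = - (1)) by (replace (q ^ 3) with ((1 + q ^ 3) - 1) by ring; rewrite E; ring).
    rewrite H in H3. rewrite Cmod_opp, Cmod_1 in H3. lra. }
  assert (Hq3' : 1 + q * (q * q) <> 0) by (replace (q * (q * q)) with (q ^ 3) by ring; exact Hq3).
  destruct (qpoch_cv q q hq) as [P1 HP1].
  destruct (qpoch_cv (q ^ 4) (q ^ 4) H4) as [P4 HP4].
  assert (P1nz := qpoch_nz q q P1 hq hq HP1).
  assert (P4nz := qpoch_nz _ _ P4 H4 H4 HP4).
  rewrite (qpoch_inf_eq _ _ _ HP1), (qpoch_inf_eq _ _ _ HP4).
  set (Qq := qpoch q q). set (Q4 := qpoch (q ^ 4) (q ^ 4)).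
  assert (Qqnz : forall n, Qq n <> 0) by (intros; apply qpoch_fin_nz; auto).
  assert (Q4nz : forall n, Q4 n <> 0) by (intros; apply qpoch_fin_nz; auto).
  assert (Hx : CV (fun n => q ^ (2 * n)) 0) by (apply CV_double, CV_pow0; auto).
  split.
  -
    assert (Tail : forall n, qpoch_inf (q ^ (4 * n + 4)) (q ^ 4) = P4 / Q4 n).
    { intros n. apply qpoch_inf_eq. destruct (pow_facts q n) as (_&_&_&_&_&_&E7).
      rewrite E7.
      apply (CV_ext (fun m => Q4 (m + n)%nat * / Q4 n)).
      { intros m. rewrite Nat.add_comm. unfold Q4. rewrite qpoch_split. field. apply Q4nz. }
      apply CV_mult. apply CV_shift. exact HP4. apply CV_const. }
    set (c := fun n => P4 * (Qq (2 * n)%nat / Q4 n *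
               (- q * (1 - q) + q ^ 2 * q ^ (2 * n) + q * q ^ (2 * n) * q ^ (2 * n)) / (1 + q ^ 3))).
    assert (HT : is_series (fun n : nat => q ^ (4 * n + 1) * qpoch_inf (q ^ (4 * n + 4)) (q ^ 4)
                    * qpoch q q (2 * n)) (c O - P4 * (P1 / P4 * (- q * (1 - q)) / (1 + q ^ 3)))).
    { apply telescope.
      - intros n. rewrite Tail. unfold c.
        destruct (pow_facts q n) as (E1&E2&E3&E4&E5&E6&E7).
        set (x := q ^ (2 * n)) in *.
        assert (EQ : Qq (2 * S n)%nat = Qq (2 * n)%nat * (1 - q * x) * (1 - q * (q * x))).
        { replace (2 * S n)%nat with (S (S (2 * n))) by lia. unfold Qq. rewrite !qpoch_S.
          rewrite Cpow_S. fold x. ring. }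
        assert (EQ4 : Q4 (S n) = Q4 n * (1 - q ^ 4 * (x * x))).
        { unfold Q4. rewrite qpoch_S. fold Q4. rewrite E2. reflexivity. }
        assert (Z1 : Q4 (S n) <> 0) by apply Q4nz.
        rewrite EQ4 in Z1.
        assert (Z2 : 1 - q ^ 4 * (x * x) <> 0) by (intros E; apply Z1; rewrite E; ring).
        rewrite EQ, EQ4, E6, E3.
        change (qpoch q q (2 * n)) with (Qq (2 * n)%nat). field. repeat split; auto.
      - unfold c. apply CV_mult. apply CV_const.
        apply (CV_eq _ (P1 / P4 * (- q * (1 - q) + q ^ 2 * 0 + q * 0 * 0) * / (1 + q ^ 3))).
        2: { field. auto. }
        apply CV_mult; [|apply CV_const].
        apply CV_mult.
        + apply CV_mult. apply CV_double. exact HP1. apply CV_inv; auto.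
        + apply CV_plus. apply CV_plus. apply CV_const. apply CV_mult. apply CV_const. exact Hx.
          apply CV_mult. apply CV_mult. apply CV_const. exact Hx. exact Hx. }
    eapply is_series_ext; [intros n; reflexivity|].
    replace (2 * q ^ 2 * P4 / (1 + q ^ 3) + q * (1 - q) * P1 / (1 + q ^ 3))
      with (c O - P4 * (P1 / P4 * (- q * (1 - q)) / (1 + q ^ 3))).
    exact HT.
    unfold c. simpl. unfold Qq, Q4. simpl. field. split; auto.
  - set (Qm := qpoch (- q ^ 2) (q ^ 2)). set (Qo := qpoch q (q ^ 2)).
    assert (Qonz : forall n, Qo n <> 0) by (intros; apply qpoch_fin_nz; auto).
    assert (Fin : forall n, Qq (2 * n)%nat * Qm n = Q4 n * Qo n).
    { induction n as [|n IH]. reflexivity.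
      destruct (pow_facts q n) as (E1&E2&E3&E4&E5&E6&E7).
      set (x := q ^ (2 * n)) in *.
      assert (EQ : Qq (2 * S n)%nat = Qq (2 * n)%nat * (1 - q * x) * (1 - q * (q * x))).
      { replace (2 * S n)%nat with (S (S (2 * n))) by lia. unfold Qq. rewrite !qpoch_S.
        rewrite Cpow_S. fold x. ring. }
      unfold Qm, Q4, Qo. rewrite !qpoch_S. fold Qm Q4 Qo. rewrite EQ, E1, E2.
      transitivity ((Qq (2 * n)%nat * Qm n) * ((1 - q * x) * (1 - q * (q * x)) * (1 - - q ^ 2 * x))).
      ring. rewrite IH. ring. }
    set (d := fun n => - (q * (q - q ^ (2 * n)) * (Qm n / Qo n)) / (1 + q ^ 3)).
    assert (HD : CV d (- (q * (q - 0) * (P4 * / P1)) / (1 + q ^ 3))).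
    { unfold d. apply CV_mult; [|apply CV_const]. apply CV_opp. apply CV_mult.
      apply CV_mult. apply CV_const. apply CV_plus. apply CV_const. apply CV_opp. exact Hx.
      apply (CV_ext (fun n => Q4 n * / Qq (2 * n)%nat)).
      { intros n. assert (F := Fin n). assert (Z := Qqnz (2 * n)%nat). assert (Z' := Qonz n).
        assert (G : Qm n = Q4 n * Qo n / Qq (2 * n)%nat) by (rewrite <- F; field; auto).
        rewrite G. field. split; auto. }
      apply CV_mult. exact HP4. apply CV_inv. auto. apply CV_double. exact HP1. }
    exists (d 0%nat - (- (q * (q - 0) * (P4 * / P1)) / (1 + q ^ 3))).
    split.
    + apply telescope; [|exact HD].
      intros n. unfold d.
      destruct (pow_facts q n) as (E1&E2&E3&E4&E5&E6&E7).
      set (x := q ^ (2 * n)) in *.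
      assert (EQo : Qo (S n) = Qo n * (1 - q * x)).
      { unfold Qo. rewrite qpoch_S. fold Qo. rewrite E1. reflexivity. }
      assert (EQm : Qm (S n) = Qm n * (1 - - q ^ 2 * x)).
      { unfold Qm. rewrite qpoch_S. fold Qm. rewrite E1. reflexivity. }
      assert (Z1 : Qo (S n) <> 0) by apply Qonz.
      rewrite EQo in Z1.
      assert (Z2 : 1 - q * x <> 0) by (intros E; apply Z1; rewrite E; ring).
      rewrite EQo, EQm, E6, E4.
      change (qpoch (- q ^ 2) (q ^ 2) n) with (Qm n). change (qpoch q (q ^ 2) n) with (Qo n).
      field. repeat split; auto.
    + unfold d. simpl. unfold Qm, Qo. simpl. field. auto.
Qed.
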